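(* Let $G=(S,C,H)$ be a thin spider graph with weight $r\ge2$ and $T_H$ an MDNS of $G[H]$. Then: (1) $\tilde\gamma_{gr}^{\times 2}((S_f,C,H))=\tilde\gamma_{gr}^{\times 2}(G)+1=2r+1+\tilde\gamma_{gr}^{\times 2}(G[H])$ and $T_H\oplus(c_1,\dots,c_r,s_1,\dots,s_r,s'_r)$ is an MDNS of $(S_f,C,H)$; (2) if $H=\emptyset$ or $a(G[H])=1$, then $\tilde\gamma_{gr}^{\times 2}((S_t,C,H))=\tilde\gamma_{gr}^{\times 2}(G)+1=2r+1+\tilde\gamma_{gr}^{\times 2}(G[H])$ and $T_H\oplus(s_r,s'_r,c_r,c_1,\dots,c_{r-1},s_1,\dots,s_{r-1})$ is an MDNS of $(S_t,C,H)$; (3) if $H\neq\emptyset$ and $a(G[H])=0$, then $\tilde\gamma_{gr}^{\times 2}((S_t,C,H))=2r+\tilde\gamma_{gr}^{\times 2}(G[H])$ and $T_H\oplus(c_1,\dots,c_r,s_1,\dots,s_r)$ is an MDNS of $(S_t,C,H)$; (4) if $H=\emptyset$, then $\tilde\gamma_{gr}^{\times 2}((S,C_f,H))=\tilde\gamma_{gr}^{\times 2}((S,C_t,H))=\tilde\gamma_{gr}^{\times 2}(G)+1=2r+1$ and $(s_r,c_r,c'_r,c_1,\dots,c_{r-1},s_1,\dots,s_{r-1})$ is an MDNS of both $(S,C_f,H)$ and $(S,C_t,H)$; (5) if $H\neq\emptyset$, then $\tilde\gamma_{gr}^{\times 2}((S,C_f,H))=\tilde\gamma_{gr}^{\times 2}((S,C_t,H))=2r+\tilde\gamma_{gr}^{\times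 2}(G[H])$ and $T_H\oplus(c_1,\dots,c_r,s_1,\dots,s_r)$ is an MDNS of both.
   Context: Graphs are finite, simple, undirected; $N(v)$ open, $N[v]$ closed neighborhood. A sequence of distinct vertices $(v_1,\dots,v_k)$ is a double neighborhood sequence (DNS) if for each $i$ some $u\in N[v_i]$ satisfies $|\{j<i:u\in N[v_j]\}|\le 1$; an MDNS is a DNS of maximum length and $\tilde\gamma_{gr}^{\times 2}$ is that length; for the empty graph it is $0$ with the empty sequence. $\oplus$ is concatenation. $a(X)=1$ if $X$ has an isolated vertex, else $0$. A spider graph $G=(S,C,H)$: $V(G)$ is partitioned into $S=\{s_1,\dots,s_r\}$ (stable), $C=\{c_1,\dots,c_r\}$ (clique), $H$ (possibly empty), $r\ge 2$, all edges between $C$ and $H$, none between $H$ and $S$; thin means $s_ic_j\in E$ iff $i=j$. Quasi-spider graphs: $(S_f,C,H)$ (resp. $(S_t,C,H)$) is obtained from $G$ by adding a new vertex $s'_r$ that is a false twin of $s_r$, i.e. $N(s'_r)=N(s_r)$ (resp. a true twin, i.e. $N[s'_r]=N[s_r]\cup\{s'_r\}$ with $s'_r$ adjacent to $s_r$); $(S,C_f,H)$ and $(S,C_t,H)$ are obtained analogously by adding a false (resp. true) twin $c'_r$ of $c_r$. *)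

(* Defs.v *)
From mathcomp Require Import all_boot.
Set Implicit Arguments. Unset Strict Implicit. Unset Printing Implicit Defensive.

(* A simple graph on a finType T is a symmetric irreflexive relation adj.
   Induced subgraphs G[V] are represented by a vertex set V : {set T}. *)
Section DNS.
Variable T : finType.
Variable adj : rel T.

Definition cnbh (V : {set T}) (v : T) : {set T} :=
  [set u in V | (u == v) || adj v u].

Fixpoint dns_aux (V : {set T}) (prev rest : seq T) : bool :=
  match rest with
  | [::] => true
  | v :: rest' =>
      [exists u in cnbh V v, count (fun w => u \in cnbh V w) prev <= 1]
      && dns_aux V (rcons prev v) rest'
  end.

Definition is_DNS (V : {set T}) (s : seq T) : bool :=
  [&& uniq s, all (fun v => v \in V) s & dns_aux V [::] s].

(* gamma~_gr^{x2}(G[V]): maximum length of a DNS (0 for the empty graph) *)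
Definition gamma (V : {set T}) : nat :=
  \max_(k < #|V|.+1 | [exists t : k.-tuple T, is_DNS V t]) k.

Definition is_MDNS (V : {set T}) (s : seq T) : Prop :=
  is_DNS V s /\ size s = gamma V.

(* a(G[V]) = 1 *)
Definition has_isolated (V : {set T}) : bool :=
  [exists v in V, [forall u in V, ~~ adj v u]].

Definition thin_spider (r : nat) (s c : nat -> T) (H : {set T}) : Prop :=
  [/\ 2 <= r,
      {in [pred i | 1 <= i <= r] &, injective s},
      {in [pred i | 1 <= i <= r] &, injective c},
      (forall i j, 1 <= i <= r -> 1 <= j <= r -> s i != c j)
    & (forall x, (x \in H) = ~~ has (fun i => (x == s i) || (x == c i)) (iota 1 r))] /\
  [/\ (forall i j, 1 <= i <= r -> 1 <= j <= r -> ~~ adj (s i) (s j)),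
      (forall i j, 1 <= i <= r -> 1 <= j <= r -> i != j -> adj (c i) (c j)),
      (forall i h, 1 <= i <= r -> h \in H -> adj (c i) h && ~~ adj (s i) h)
    & (forall i j, 1 <= i <= r -> 1 <= j <= r -> adj (s i) (c j) = (i == j))].
End DNS.

(* graph on option T: None is a new vertex with (open) neighbourhood N *)
Definition ext_adj (T : finType) (adj : rel T) (N : pred T) : rel (option T) :=
  fun x y => match x, y with
  | Some a, Some b => adj a b
  | None, Some b => N b
  | Some a, None => N a
  | None, None => false
  end.

Definition add_false_twin (T : finType) (adj : rel T) (v : T) :=
  ext_adj adj (adj v).
Definition add_true_twin (T : finType) (adj : rel T) (v : T) :=
  ext_adj adj (fun b => (b == v) || adj v b).

(* Main.v *)
Require Import Defs.
From mathcomp Require Import all_boot.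
From mathcomp Require Import zify.
Set Implicit Arguments. Unset Strict Implicit. Unset Printing Implicit Defensive.


Section Gen.
Variables (U : finType) (e : rel U).

Definition wit (V : {set U}) (p : seq U) (v : U) :=
  [exists u in cnbh e V v, count (fun w => u \in cnbh e V w) p <= 1].

Lemma cnbhT u w : (u \in cnbh e setT w) = (u == w) || e w u.
Proof. by rewrite inE in_setT. Qed.

Lemma dns_aux_cat V p a b :
  dns_aux e V p (a ++ b) = dns_aux e V p a && dns_aux e V (p ++ a) b.
Proof.
elim: a p => [|x a IH] p /=; first by rewrite cats0.
by rewrite IH cat_rcons andbA.
Qed.

Lemma dns_rcons V p v : is_DNS e V (rcons p v) =
  [&& is_DNS e V p, v \notin p, v \in V & wit V p v].
Proof.
rewrite /is_DNS rcons_uniq all_rcons -cats1 dns_aux_cat /= andbT /wit.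
by case: (v \notin p); case: (uniq p); case: (v \in V); case: (all _ p);
  case: (dns_aux _ _ _ p); case: [exists _ in _, _].
Qed.

Lemma dns_rconsP V p v : is_DNS e V p -> v \notin p -> v \in V -> wit V p v ->
  is_DNS e V (rcons p v).
Proof. by move=> *; rewrite dns_rcons; apply/and4P. Qed.

Lemma dns_rconsT p v : is_DNS e setT p -> v \notin p -> wit setT p v ->
  is_DNS e setT (rcons p v).
Proof. by move=> D vp W; apply: dns_rconsP; rewrite ?in_setT. Qed.

Lemma dns_pos V s p v q : is_DNS e V s -> s = p ++ v :: q -> wit V p v.
Proof.
move=> /and3P[_ _ D] E; move: D; rewrite E dns_aux_cat /= => /and3P[_ W _].
exact: W.
Qed.

Lemma dns_uniq V s : is_DNS e V s -> uniq s.
Proof. by case/and3P. Qed.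

Lemma dns_take V s z : is_DNS e V s -> z \in s ->
  exists2 u, u \in cnbh e V z &
     count (fun w => u \in cnbh e V w) (take (index z s) s) <= 1.
Proof.
move=> D zs.
have E : s = take (index z s) s ++ z :: drop (index z s).+1 s.
  by rewrite -{1}(cat_take_drop (index z s) s) (drop_nth z) ?index_mem // nth_index.
by have /exists_inP[u Hu Hc] := dns_pos D E; exists u.
Qed.

Lemma count2 (P : pred U) t y1 y2 : y1 != y2 -> y1 \in t -> y2 \in t ->
  P y1 -> P y2 -> 1 < count P t.
Proof.
move=> ne h1 h2 p1 p2; rewrite -size_filter.
have -> : 2 = size [:: y1; y2] by [].
apply: uniq_leq_size; first by rewrite /= inE ne.
by move=> y; rewrite !inE => /orP[]/eqP->; rewrite mem_filter ?p1 ?p2.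
Qed.

Lemma count_le1 (P : pred U) t : uniq t ->
  (forall y1 y2, y1 \in t -> y2 \in t -> P y1 -> P y2 -> y1 = y2) ->
  count P t <= 1.
Proof.
move=> ut H; rewrite -size_filter.
case E : (filter P t) => [|y1 r] //.
have y1f : y1 \in filter P t by rewrite E inE eqxx.
rewrite -E; have -> : 1 = size [:: y1] by [].
apply: uniq_leq_size; first exact: filter_uniq.
move=> y yf; rewrite inE; apply/eqP.
move: yf y1f; rewrite !mem_filter => /andP[py yt] /andP[py1 y1t].
exact: H.
Qed.

Lemma in_pre (s : seq U) y z : y \in s -> (y \in take (index z s) s) = (index y s < index z s).
Proof. by move=> ys; rewrite in_take. Qed.

Lemma gamma_ge V t : is_DNS e V t -> size t <= gamma e V.
Proof.
move=> D; have /and3P[ut /allP aV _] := D.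
have lt : size t < #|V|.+1.
  rewrite ltnS -(card_uniqP ut); apply: subset_leq_card; apply/subsetP => x.
  exact: aV.
rewrite /gamma.
have := @leq_bigmax_cond _ (fun k : 'I_(#|V|.+1) => [exists t0 : k.-tuple U, is_DNS e V t0])
  (fun k => nat_of_ord k) (Ordinal lt).
apply; apply/existsP; exists (in_tuple t); done.
Qed.

Lemma gamma_le V B : (forall t, is_DNS e V t -> size t <= B) -> gamma e V <= B.
Proof.
move=> H; apply/bigmax_leqP => k /existsP[t Dt].
by have := H _ Dt; rewrite size_tuple.
Qed.

Lemma wit0 V p v u : u \in cnbh e V v ->
  (forall y, y \in p -> u \notin cnbh e V y) -> wit V p v.
Proof.
move=> uN H; apply/exists_inP; exists u => //.
suff -> : count (fun w => u \in cnbh e V w) p = 0 by [].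
apply/eqP; rewrite eqn0Ngt -has_count; apply/hasP => -[y yp]; apply/negP; exact: H.
Qed.

Lemma wit1 V p v u : u \in cnbh e V v -> uniq p ->
  (forall y1 y2, y1 \in p -> y2 \in p -> u \in cnbh e V y1 -> u \in cnbh e V y2 -> y1 = y2) ->
  wit V p v.
Proof. by move=> uN up H; apply/exists_inP; exists u => //; apply: count_le1. Qed.

Lemma catmap V p (F : nat -> U) n : is_DNS e V p ->
  (forall k, 1 <= k <= n -> is_DNS e V (p ++ map F (iota 1 k.-1)) ->
    [/\ F k \notin p ++ map F (iota 1 k.-1), F k \in V &
      wit V (p ++ map F (iota 1 k.-1)) (F k)]) ->
  is_DNS e V (p ++ map F (iota 1 n)).
Proof.
move=> Dp; elim: n => [|n IH] Hk; first by rewrite cats0.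
have -> : iota 1 n.+1 = rcons (iota 1 n) n.+1.
  by rewrite -[n.+1]addn1 iotaD -cats1 /= add1n addn1.
have Dn : is_DNS e V (p ++ map F (iota 1 n)).
  apply: IH => k /andP[k1 kn]; apply: Hk.
  by rewrite k1 (leq_trans kn).
rewrite map_rcons -rcons_cat; have [h1 h2 h3] := Hk n.+1 (leqnn _) Dn.
exact: dns_rconsP.
Qed.

Lemma last3 (t : seq U) a b d :
  exists2 z, z \in [:: a; b; d] & forall w, w \in [:: a; b; d] -> index w t <= index z t.
Proof.
case: (leqP (index a t) (index b t)) => ab; case: (leqP (index b t) (index d t)) => bd;
  case: (leqP (index a t) (index d t)) => ad.
all: first [ exists d; [by rewrite !inE eqxx ?orbT |
               move=> w; rewrite !inE => /or3P[]/eqP->; lia]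
           | exists b; [by rewrite !inE eqxx ?orbT |
               move=> w; rewrite !inE => /or3P[]/eqP->; lia]
           | exists a; [by rewrite !inE eqxx ?orbT |
               move=> w; rewrite !inE => /or3P[]/eqP->; lia]].
Qed.

Lemma pre_mem (t : seq U) y z : y \in t -> z \in t -> y != z ->
  index y t <= index z t -> y \in take (index z t) t.
Proof.
move=> yt zt ne le; rewrite in_take // ltn_neqAle le andbT.
by apply: contra ne => /eqP /(index_inj y yt zt) ->.
Qed.

Lemma twice (P : pred U) (t : seq U) y1 y2 : count P t <= 1 -> y1 != y2 ->
  y1 \in t -> y2 \in t -> P y1 -> P y2 -> False.
Proof.
move=> c ne h1 h2 p1 p2; have := count2 ne h1 h2 p1 p2; lia.
Qed.

End Gen.


Section Restrict.
Variables (U T : finType) (e : rel U) (a : rel T) (f : T -> U) (H : {set T}).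
Hypotheses (finj : injective f) (esy : symmetric e)
  (eH : forall x y, e (f x) (f y) = a x y)
  (emod : forall y h h', y \notin f @: H -> h \in H -> h' \in H ->
           e y (f h) -> e y (f h')).

Lemma cov_f w y : w \in H -> y \in H ->
  (w \in cnbh a H y) = (f w \in cnbh e setT (f y)).
Proof. by move=> wH yH; rewrite cnbhT !inE wH (inj_eq finj) eH. Qed.

Lemma restrict s : is_DNS e setT s ->
  exists A, map f A = filter (mem (f @: H)) s /\ is_DNS a H A.
Proof.
elim/last_ind: s => [|p v IH]; first by exists [::].
rewrite dns_rcons => /and4P[Dp vp _ W].
have [A [EA DA]] := IH Dp.
rewrite filter_rcons /=.
case: (boolP (v \in f @: H)) => vH; last by exists A.
have [x xH Ev] := imsetP vH; subst v.
exists (rcons A x); split; first by rewrite map_rcons EA.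
have /and3P[uA /allP AH _] := DA.
have xA : x \notin A.
  apply/negP => xA; move/negP: vp => vp; apply: vp.
  have : f x \in map f A by apply: map_f.
  rewrite EA mem_filter => /andP[_ hh]; exact: hh.
rewrite dns_rcons DA xA xH /=.
have /exists_inP[u0 u0N u0c] := W.
have cntA : forall P : pred U, count (P \o f) A <= count P p.
  move=> P; rewrite -(count_map f P) EA count_filter; apply: sub_count.
  by move=> y /andP[].
case: (boolP (u0 \in f @: H)) => u0H.
  have [h hH Eu] := imsetP u0H; subst u0.
  apply/exists_inP; exists h.
    by rewrite (cov_f hH xH).
  apply: leq_trans u0c; apply: leq_trans (cntA _).
  rewrite leq_eqVlt; apply/orP; left; apply/eqP; apply: eq_in_count => y yA /=.
  by rewrite (cov_f hH (AH _ yA)).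
have ne : u0 != f x by apply/negP => /eqP E; move: u0H; rewrite E mem_imset // xH.
move: u0N; rewrite cnbhT (negbTE ne) /= => exu.
have eux : e u0 (f x) by rewrite esy.
apply/exists_inP; exists x.
  by rewrite inE xH eqxx.
apply: leq_trans u0c; apply: leq_trans (cntA _).
apply: leq_trans (count_size _ _) _.
rewrite leq_eqVlt; apply/orP; left; apply/eqP; apply/esym.
apply/eqP; rewrite -all_count; apply/allP => y yA /=.
by rewrite cnbhT esy (emod u0H xH (AH _ yA) eux) orbT.
Qed.

Lemma restrict_count s A w : map f A = filter (mem (f @: H)) s -> all (mem H) A ->
  w \in H ->
  count (fun y => w \in cnbh a H y) A =
  count (fun y => (y \in f @: H) && (f w \in cnbh e setT y)) s.
Proof.
move=> EA /allP AH wH.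
have -> : count (fun y => w \in cnbh a H y) A =
          count (fun y => f w \in cnbh e setT y) (map f A).
  rewrite count_map; apply: eq_in_count => y yA /=.
  by rewrite (cov_f wH (AH _ yA)).
by rewrite EA count_filter; apply: eq_count => y /=; rewrite andbC.
Qed.

Variable L : seq U.
Hypothesis hL : forall y, y \notin f @: H -> y \in L.

Lemma size_split s : size s = count (mem (f @: H)) s + count (predC (mem (f @: H))) s.
Proof. by rewrite count_predC. Qed.

Lemma nonH_le s : uniq s -> count (predC (mem (f @: H))) s <= size L.
Proof.
move=> us; rewrite -size_filter; apply: uniq_leq_size; first exact: filter_uniq.
by move=> y; rewrite mem_filter => /andP[/= yn _]; apply: hL.
Qed.

Lemma nonH_miss s x : uniq s -> x \in L -> x \notin s ->
  count (predC (mem (f @: H))) s <= (size L).-1.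
Proof.
move=> us xL xs; rewrite -size_filter.
apply: (@leq_trans (size (filter (predC1 x) L))).
  apply: uniq_leq_size; first exact: filter_uniq.
  move=> y; rewrite !mem_filter => /andP[/= yn ys].
  rewrite hL // andbT; apply/negP => /eqP E; subst y; by rewrite ys in xs.
rewrite size_filter.
have -> : count (predC1 x) L = count (predC (pred1 x)) L by apply: eq_count.
have E := count_predC (pred1 x) L.
have : 0 < count (pred1 x) L by rewrite -has_count; apply/hasP; exists x => //=.
rewrite -E; case: (count (pred1 x) L) => // n _; by rewrite addSn /= leq_addl.
Qed.

Lemma upper s : is_DNS e setT s -> size s <= size L + gamma a H.
Proof.
move=> D; have [A [EA DA]] := restrict D.
rewrite size_split -size_filter -EA size_map addnC leq_add //.
  exact: nonH_le (dns_uniq D).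
exact: gamma_ge.
Qed.

Lemma upper_miss s x : is_DNS e setT s -> x \in L -> x \notin s ->
  size s <= (size L).-1 + gamma a H.
Proof.
move=> D xL xs; have [A [EA DA]] := restrict D.
rewrite size_split -size_filter -EA size_map addnC leq_add //.
  exact: nonH_miss (dns_uniq D) xL xs.
exact: gamma_ge.
Qed.

Lemma upper_ref s x w : is_DNS e setT s -> x \in H -> f x \notin s -> w \in H ->
  (w == x) || a x w ->
  count (fun y => (y \in f @: H) && (f w \in cnbh e setT y)) s <= 1 ->
  (size s).+1 <= size L + gamma a H.
Proof.
move=> D xH xs wH wx cnt; have [A [EA DA]] := restrict D.
rewrite size_split -size_filter -EA size_map addnC -addnS leq_add //.
  exact: nonH_le (dns_uniq D).
have /and3P[uA AH _] := DA.
have xA : x \notin A.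
  apply/negP => xA; move/negP: xs => xs; apply: xs.
  have : f x \in map f A by apply: map_f.
  rewrite EA mem_filter => /andP[_ hh]; exact: hh.
rewrite -(size_rcons A x); apply: gamma_ge; apply: dns_rconsP => //.
apply/exists_inP; exists w; first by rewrite inE wH.
by rewrite (restrict_count EA AH wH).
Qed.

End Restrict.


Section Spider.
Variables (T : finType) (adj : rel T) (r : nat) (s c : nat -> T) (H : {set T}).
Hypotheses (asym : symmetric adj) (airr : irreflexive adj) (r2 : 1 < r).
Hypothesis sinj : {in [pred i | 1 <= i <= r] &, injective s}.
Hypothesis cinj : {in [pred i | 1 <= i <= r] &, injective c}.
Hypothesis snc : forall i j, 1 <= i <= r -> 1 <= j <= r -> s i != c j.
Hypothesis Hdef : forall x, (x \in H) = ~~ has (fun i => (x == s i) || (x == c i)) (iota 1 r).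
Hypothesis ssn : forall i j, 1 <= i <= r -> 1 <= j <= r -> ~~ adj (s i) (s j).
Hypothesis cca : forall i j, 1 <= i <= r -> 1 <= j <= r -> i != j -> adj (c i) (c j).
Hypothesis chH : forall i h, 1 <= i <= r -> h \in H -> adj (c i) h && ~~ adj (s i) h.
Hypothesis scE : forall i j, 1 <= i <= r -> 1 <= j <= r -> adj (s i) (c j) = (i == j).

Lemma rr : 1 <= r <= r.
Proof. by rewrite leqnn andbT ltnW. Qed.

Lemma iota_rng i : (i \in iota 1 r) = (1 <= i <= r).
Proof. by rewrite mem_iota add1n ltnS. Qed.

Lemma sH i : 1 <= i <= r -> (s i \in H) = false.
Proof.
move=> ir; rewrite Hdef; apply/negbF/hasP; exists i; first by rewrite iota_rng.
by rewrite eqxx.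
Qed.

Lemma cH i : 1 <= i <= r -> (c i \in H) = false.
Proof.
move=> ir; rewrite Hdef; apply/negbF/hasP; exists i; first by rewrite iota_rng.
by rewrite eqxx orbT.
Qed.

Lemma notH x : x \notin H -> exists2 i, 1 <= i <= r & (x = s i) \/ (x = c i).
Proof.
rewrite Hdef negbK => /hasP[i]; rewrite iota_rng => ir /orP[]/eqP ->; exists i => //;
  by [left | right].
Qed.

Lemma sh i h : 1 <= i <= r -> h \in H -> adj (s i) h = false.
Proof. by move=> ir hH; have /andP[_ /negbTE] := chH ir hH. Qed.
Lemma hs i h : 1 <= i <= r -> h \in H -> adj h (s i) = false.
Proof. by move=> ir hH; rewrite asym sh. Qed.
Lemma ch i h : 1 <= i <= r -> h \in H -> adj (c i) h.
Proof. by move=> ir hH; have /andP[] := chH ir hH. Qed.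
Lemma hc i h : 1 <= i <= r -> h \in H -> adj h (c i).
Proof. by move=> ir hH; rewrite asym ch. Qed.
Lemma cs i j : 1 <= i <= r -> 1 <= j <= r -> adj (c j) (s i) = (i == j).
Proof. by move=> ir jr; rewrite asym scE. Qed.
Lemma ss i j : 1 <= i <= r -> 1 <= j <= r -> adj (s i) (s j) = false.
Proof. by move=> ir jr; apply/negbTE/ssn. Qed.
Lemma cc i j : 1 <= i <= r -> 1 <= j <= r -> adj (c i) (c j) = (i != j).
Proof.
move=> ir jr; case: eqP => [->|/eqP ne]; first by rewrite airr.
exact: cca.
Qed.
Lemma seqE i j : 1 <= i <= r -> 1 <= j <= r -> (s i == s j) = (i == j).
Proof. by move=> ir jr; apply/eqP/eqP => [|->] //; apply: sinj. Qed.
Lemma ceqE i j : 1 <= i <= r -> 1 <= j <= r -> (c i == c j) = (i == j).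
Proof. by move=> ir jr; apply/eqP/eqP => [|->] //; apply: cinj. Qed.
Lemma sceq i j : 1 <= i <= r -> 1 <= j <= r -> (s i == c j) = false.
Proof. by move=> ir jr; apply/negbTE/snc. Qed.
Lemma cseq i j : 1 <= i <= r -> 1 <= j <= r -> (c j == s i) = false.
Proof. by move=> ir jr; rewrite eq_sym sceq. Qed.
Lemma sheq i h : 1 <= i <= r -> h \in H -> (s i == h) = false.
Proof. by move=> ir hH; apply/negbTE/negP => /eqP E; move: hH; rewrite -E sH. Qed.
Lemma hseq i h : 1 <= i <= r -> h \in H -> (h == s i) = false.
Proof. by move=> ir hH; rewrite eq_sym sheq. Qed.
Lemma cheq i h : 1 <= i <= r -> h \in H -> (c i == h) = false.
Proof. by move=> ir hH; apply/negbTE/negP => /eqP E; move: hH; rewrite -E cH. Qed.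
Lemma hceq i h : 1 <= i <= r -> h \in H -> (h == c i) = false.
Proof. by move=> ir hH; rewrite eq_sym cheq. Qed.

Lemma mem_mapiota (U : eqType) (F : nat -> U) n y :
  y \in [seq F i | i <- iota 1 n] -> exists2 j, 1 <= j <= n & y = F j.
Proof. by move=> /mapP[j]; rewrite mem_iota add1n ltnS => jn ->; exists j. Qed.

Section Lower.
Variables (U : finType) (e : rel U) (g : T -> U).
Hypotheses (ginj : injective g) (eg : forall a b, e (g a) (g b) = adj a b).

Lemma covg u y : (g u \in cnbh e setT (g y)) = (u == y) || adj y u.
Proof. by rewrite cnbhT (inj_eq ginj) eg. Qed.

Lemma map_dns A : is_DNS adj H A -> is_DNS e setT (map g A).
Proof.
elim/last_ind: A => [|A x IH]; first by [].
rewrite dns_rcons map_rcons => /and4P[DA xA xH W].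
apply: dns_rconsP; [exact: IH | by rewrite mem_map | by rewrite in_setT |].
have /exists_inP[u uN uc] := W; have /and3P[_ /allP AH _] := DA.
apply/exists_inP; exists (g u).
  by move: uN; rewrite inE covg => /andP[_ ->].
rewrite count_map; apply: leq_trans uc; rewrite leq_eqVlt; apply/orP; left; apply/eqP.
apply: eq_in_count => y yA /=; move: uN; rewrite covg !inE => /andP[-> _] //.
Qed.

Lemma lower_main TH : is_DNS adj H TH ->
  is_DNS e setT (map g TH ++ [seq g (c i) | i <- iota 1 r] ++ [seq g (s i) | i <- iota 1 r]).
Proof.
move=> DT; have /and3P[uT /allP THH _] := DT.
have D1 : is_DNS e setT (map g TH ++ [seq g (c i) | i <- iota 1 r]).
  apply: (catmap (F := fun i => g (c i))); first exact: map_dns.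
  move=> k kr Dk; split; [| by rewrite in_setT |].
  - rewrite mem_cat negb_or; apply/andP; split.
      by rewrite mem_map //; apply/negP => /THH; rewrite (cH kr).
    apply/negP => /mem_mapiota[j jk /ginj /cinj]; rewrite !inE => E.
    by have := E kr (ltac:(lia)); lia.
  - apply: (wit0 (u := g (s k))); first by rewrite covg (cs kr kr) eqxx orbT.
    move=> y; rewrite mem_cat => /orP[/mapP[a aT ->] | /mem_mapiota[j jk ->]].
      by rewrite covg (sheq kr (THH _ aT)) (hs kr (THH _ aT)).
    have jr : 1 <= j <= r by lia.
    by rewrite covg (sceq kr jr) (cs kr jr); apply/eqP; lia.
rewrite catA; apply: (catmap (F := fun i => g (s i))); first exact: D1.
move=> k kr Dk; split; [| by rewrite in_setT |].
- rewrite !mem_cat !negb_or -andbA; apply/and3P; split.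
  + by rewrite mem_map //; apply/negP => /THH; rewrite (sH kr).
  + apply/negP => /mem_mapiota[j jr /ginj /eqP]; rewrite (sceq kr jr). done.
  + apply/negP => /mem_mapiota[j jk /ginj /sinj]; rewrite !inE => E.
    by have := E kr (ltac:(lia)); lia.
- apply: (wit1 (u := g (s k))); first by rewrite covg eqxx.
    exact: dns_uniq Dk.
  suff Hy : forall y, y \in (map g TH ++ [seq g (c i) | i <- iota 1 r]) ++
       [seq g (s i) | i <- iota 1 k.-1] -> g (s k) \in cnbh e setT y -> y = g (c k).
    by move=> y1 y2 h1 h2 c1 c2; rewrite (Hy _ h1 c1) (Hy _ h2 c2).
  move=> y; rewrite !mem_cat => /orP[/orP[/mapP[a aT ->] | /mem_mapiota[j jr ->]] |
      /mem_mapiota[j jk ->]].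
  + by rewrite covg (sheq kr (THH _ aT)) (hs kr (THH _ aT)).
  + by rewrite covg (sceq kr jr) (cs kr jr) => /eqP ->.
  + have jr : 1 <= j <= r by lia.
    by rewrite covg (seqE kr jr) (ss jr kr) orbF => /eqP E; lia.
Qed.

End Lower.


Section Opt.
Variable N : pred T.
Local Notation X := (ext_adj adj N).

Lemma Xsym : symmetric X.
Proof. by case=> [x|] [y|] //=; rewrite asym. Qed.

Lemma covSS u y : (Some u \in cnbh X setT (Some y)) = (u == y) || adj y u.
Proof. by rewrite cnbhT (inj_eq (@Some_inj _)). Qed.
Lemma covNS y : (None \in cnbh X setT (Some y)) = N y.
Proof. by rewrite cnbhT. Qed.
Lemma covSN u : (Some u \in cnbh X setT None) = N u.
Proof. by rewrite cnbhT. Qed.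
Lemma covNN : (None \in cnbh X setT None).
Proof. by rewrite cnbhT. Qed.

Definition Lo := [seq Some (s i) | i <- iota 1 r] ++ [seq Some (c i) | i <- iota 1 r] ++ [:: None].

Lemma size_Lo : size Lo = 2 * r + 1.
Proof. rewrite /Lo !size_cat !size_map size_iota /=; lia. Qed.

Lemma inSH x : (Some x \in Some @: H) = (x \in H).
Proof. exact: mem_imset (@Some_inj _). Qed.
Lemma inNH : (None \in Some @: H) = false.
Proof. by apply/negbTE/imsetP => -[]. Qed.

Lemma hLo y : y \notin Some @: H -> y \in Lo.
Proof.
case: y => [x|]; last by rewrite /Lo !mem_cat inE eqxx !orbT.
rewrite inSH => /notH[i ir [->|->]]; rewrite /Lo !mem_cat.
  by apply/orP; left; apply/mapP; exists i; rewrite ?iota_rng.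
by apply/orP; right; apply/orP; left; apply/mapP; exists i; rewrite ?iota_rng.
Qed.

Hypothesis NH : forall h h', h \in H -> h' \in H -> N h -> N h'.

Lemma emodX y h h' : y \notin Some @: H -> h \in H -> h' \in H ->
  X y (Some h) -> X y (Some h').
Proof.
case: y => [x|] /=; last by move=> _; apply: NH.
rewrite inSH => /notH[i ir [->|->]] hH h'H; first by rewrite sh.
by rewrite !ch.
Qed.

Lemma opt_upper t : is_DNS X setT t -> size t <= 2 * r + 1 + gamma adj H.
Proof.
move=> D; rewrite -size_Lo.
exact: (upper (@Some_inj _) Xsym (fun _ _ => erefl) emodX hLo D).
Qed.

Lemma opt_upper_miss t x : is_DNS X setT t -> x \in Lo -> x \notin t ->
  size t <= 2 * r + gamma adj H.
Proof.
move=> D xL xt; have := upper_miss (@Some_inj _) Xsym (fun _ _ => erefl) emodX hLo D xL xt.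
by rewrite size_Lo addn1.
Qed.

Lemma opt_upper_ref t x w : is_DNS X setT t -> x \in H -> Some x \notin t -> w \in H ->
  (w == x) || adj x w ->
  count (fun y => (y \in Some @: H) && (Some w \in cnbh X setT y)) t <= 1 ->
  size t <= 2 * r + gamma adj H.
Proof.
move=> D xH xt wH wx cnt.
have := upper_ref (@Some_inj _) Xsym (fun _ _ => erefl) emodX hLo D xH xt wH wx cnt.
by rewrite size_Lo addn1 addSn ltnS.
Qed.

Lemma tail_dns p0 : (forall k, 1 <= k < r -> N (s k) = false) ->
  is_DNS X setT p0 ->
  (forall y, y \in p0 -> [\/ y = None, y = Some (s r), y = Some (c r) |
                            exists2 h, h \in H & y = Some h]) ->
  is_DNS X setT (p0 ++ [seq Some (c i) | i <- iota 1 r.-1] ++ [seq Some (s i) | i <- iota 1 r.-1]).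
Proof.
move=> Ns D0 P0; have r1 := rr.
have D1 : is_DNS X setT (p0 ++ [seq Some (c i) | i <- iota 1 r.-1]).
  apply: (catmap (F := fun i => Some (c i))) => // k kr Dk.
  have kr' : 1 <= k <= r by lia.
  split; [| by rewrite in_setT |].
  - rewrite mem_cat negb_or; apply/andP; split.
      apply/negP => /P0[] //.
      + by case=> /eqP; rewrite cseq.
      + by case=> /eqP; rewrite ceqE //; lia.
      + by case=> h hH [] E; move: hH; rewrite -E cH.
    apply/negP => /mem_mapiota[j jk [] /eqP]; rewrite ceqE //; lia.
  - apply: (wit0 (u := Some (s k))); first by rewrite covSS (cs kr' kr') eqxx orbT.
    move=> y; rewrite mem_cat => /orP[/P0[->|->|->|[h hH ->]]|/mem_mapiota[j jk ->]].
    + by rewrite covSN Ns //; lia.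
    + by rewrite covSS seqE ?ss //; apply/eqP; lia.
    + by rewrite covSS sceq ?cs //; apply/eqP; lia.
    + by rewrite covSS sheq ?hs.
    + by rewrite covSS sceq ?cs //; lia.
rewrite catA; apply: (catmap (F := fun i => Some (s i))) => // k kr Dk.
have kr' : 1 <= k <= r by lia.
split; [| by rewrite in_setT |].
- rewrite !mem_cat !negb_or -andbA; apply/and3P; split.
  + apply/negP => /P0[] //.
    * by case=> /eqP; rewrite seqE //; lia.
    * by case=> /eqP; rewrite sceq.
    * by case=> h hH [] E; move: hH; rewrite -E sH.
  + by apply/negP => /mem_mapiota[j jk [] /eqP]; rewrite sceq //; lia.
  + by apply/negP => /mem_mapiota[j jk [] /eqP]; rewrite seqE //; lia.
- apply: (wit1 (u := Some (s k))); first by rewrite covSS eqxx.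
    exact: dns_uniq Dk.
  suff Hy : forall y, y \in (p0 ++ [seq Some (c i) | i <- iota 1 r.-1]) ++
       [seq Some (s i) | i <- iota 1 k.-1] -> Some (s k) \in cnbh X setT y -> y = Some (c k).
    by move=> y1 y2 h1 h2 c1 c2; rewrite (Hy _ h1 c1) (Hy _ h2 c2).
  move=> y; rewrite !mem_cat => /orP[/orP[/P0[->|->|->|[h hH ->]]| /mem_mapiota[j jr ->]] |
      /mem_mapiota[j jk ->]].
  + by rewrite covSN Ns //; lia.
  + by rewrite covSS seqE ?ss // orbF => /eqP; lia.
  + by rewrite covSS sceq ?cs // => /eqP; lia.
  + by rewrite covSS sheq ?hs.
  + by rewrite covSS sceq ?cs //; try lia; move=> /eqP ->.
  + have jr : 1 <= j <= r by lia.
    by rewrite covSS (seqE kr' jr) (ss jr kr') orbF => /eqP; lia.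
Qed.

End Opt.


Lemma low_Sf TH : is_DNS adj H TH ->
  is_DNS (ext_adj adj (adj (s r))) setT
    ([seq Some x | x <- TH] ++ [seq Some (c i) | i <- iota 1 r] ++
     [seq Some (s i) | i <- iota 1 r] ++ [:: None]).
Proof.
move=> DT; have /and3P[_ /allP THH _] := DT; have r1 := rr.
have D := lower_main (e := ext_adj adj (adj (s r))) (g := Some) (@Some_inj _) (fun _ _ => erefl) DT.
rewrite !catA cats1 -!catA; refine (dns_rconsT D _ _).
  by rewrite !mem_cat; apply/negP => /or3P[] /mapP[? _ //].
apply: (wit1 (u := None)); [exact: covNN | exact: dns_uniq D |].
suff Hy : forall y, y \in [seq Some x | x <- TH] ++ [seq Some (c i) | i <- iota 1 r] ++
     [seq Some (s i) | i <- iota 1 r] -> None \in cnbh (ext_adj adj (adj (s r))) setT y ->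
     y = Some (c r).
  by move=> y1 y2 h1 h2 c1 c2; rewrite (Hy _ h1 c1) (Hy _ h2 c2).
move=> y; rewrite !mem_cat => /or3P[/mapP[a aT ->]|/mem_mapiota[j jr ->]|/mem_mapiota[j jr ->]];
  rewrite covNS /=.
- by rewrite sh // THH.
- by rewrite scE // => /eqP ->.
- by rewrite ss.
Qed.

Lemma low_St TH : is_DNS adj H TH -> (H == set0) || has_isolated adj H ->
  is_DNS (ext_adj adj (fun b => (b == s r) || adj (s r) b)) setT
    ([seq Some x | x <- TH] ++ [:: Some (s r); None; Some (c r)] ++
     [seq Some (c i) | i <- iota 1 r.-1] ++ [seq Some (s i) | i <- iota 1 r.-1]).
Proof.
move=> DT Hiso; have /and3P[_ /allP THH _] := DT; have r1 := rr.
set N := fun b => (b == s r) || adj (s r) b.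
have D0 := map_dns (e := ext_adj adj N) (@Some_inj _) (fun _ _ => erefl) DT.
have D1 : is_DNS (ext_adj adj N) setT (rcons [seq Some x | x <- TH] (Some (s r))).
  refine (dns_rconsT D0 _ _).
    by rewrite (mem_map (@Some_inj _)); apply/negP => /THH; rewrite sH.
  apply: (wit0 (u := Some (s r))); first by rewrite covSS eqxx.
  by move=> y /mapP[a aT ->]; rewrite covSS sheq ?hs // THH.
have D2 : is_DNS (ext_adj adj N) setT (rcons (rcons [seq Some x | x <- TH] (Some (s r))) None).
  refine (dns_rconsT D1 _ _).
    by rewrite mem_rcons inE /=; apply/negP => /mapP[? _ //].
  apply: (wit1 (u := None)); [exact: covNN | exact: dns_uniq D1 |].
  suff Hy : forall y, y \in rcons [seq Some x | x <- TH] (Some (s r)) ->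
     None \in cnbh (ext_adj adj N) setT y -> y = Some (s r).
    by move=> y1 y2 h1 h2 c1 c2; rewrite (Hy _ h1 c1) (Hy _ h2 c2).
  move=> y; rewrite mem_rcons in_cons => /orP[/eqP -> //|/mapP[a aT ->]].
  by rewrite covNS /N hseq ?sh // THH.
have D3 : is_DNS (ext_adj adj N) setT
    (rcons (rcons (rcons [seq Some x | x <- TH] (Some (s r))) None) (Some (c r))).
  refine (dns_rconsT D2 _ _).
    rewrite mem_rcons inE /= mem_rcons inE (inj_eq (@Some_inj _)) cseq //=.
    apply/negP => /mapP[a aT [] E]; by move: (THH _ aT); rewrite -E cH.
  case/orP: Hiso => [/eqP H0 | /exists_inP[h0 h0H /forall_inP h0i]].
    have -> : TH = [::].
      case: TH THH {DT D0 D1 D2} => // a TH' THH.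
      by have := THH a (mem_head _ _); rewrite H0 inE.
    apply: (wit0 (u := Some (c 1))).
      by rewrite covSS cc //; [apply/orP; right; apply/eqP; lia | lia].
    have c1r : 1 <= 1 <= r by lia.
    move=> y; rewrite /= !in_cons in_nil orbF => /orP[/eqP ->|/eqP ->].
      by rewrite covSS cseq // (scE r1 c1r); apply/eqP; lia.
    by rewrite covSN /N cseq // (scE r1 c1r); apply/eqP; lia.
  apply: (wit1 (u := Some h0)); first by rewrite covSS hceq // ch.
    exact: dns_uniq D2.
  suff Hy : forall y, y \in rcons (rcons [seq Some x | x <- TH] (Some (s r))) None ->
     Some h0 \in cnbh (ext_adj adj N) setT y -> y = Some h0.
    by move=> y1 y2 h1 h2 c1 c2; rewrite (Hy _ h1 c1) (Hy _ h2 c2).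
  move=> y; rewrite mem_rcons in_cons mem_rcons in_cons => /or3P[/eqP ->|/eqP ->|/mapP[a aT ->]].
  - by rewrite covSN /N hseq ?sh.
  - by rewrite covSS hseq ?sh.
  rewrite covSS asym (negbTE (h0i _ (THH _ aT))) orbF => /eqP -> //.
have -> : [seq Some x | x <- TH] ++ [:: Some (s r); None; Some (c r)] ++
     [seq Some (c i) | i <- iota 1 r.-1] ++ [seq Some (s i) | i <- iota 1 r.-1] =
     (rcons (rcons (rcons [seq Some x | x <- TH] (Some (s r))) None) (Some (c r))) ++
     [seq Some (c i) | i <- iota 1 r.-1] ++ [seq Some (s i) | i <- iota 1 r.-1].
  by rewrite -!cats1 -!catA.
apply: tail_dns D3 _.
  move=> k kr; rewrite /N seqE ?ss //; try lia; apply/eqP; lia.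
move=> y; rewrite mem_rcons in_cons mem_rcons in_cons mem_rcons in_cons => /or4P[/eqP ->|/eqP ->|/eqP ->|/mapP[a aT ->]].
- by constructor 3.
- by constructor 1.
- by constructor 2.
- by constructor 4; exists a; rewrite ?THH.
Qed.

Lemma low_C (N : pred T) : N (c 1) -> (forall k, 1 <= k < r -> N (s k) = false) ->
  is_DNS (ext_adj adj N) setT
    ([:: Some (s r); Some (c r); None] ++
     [seq Some (c i) | i <- iota 1 r.-1] ++ [seq Some (s i) | i <- iota 1 r.-1]).
Proof.
move=> Nc1 Ns; have r1 := rr; have c1r : 1 <= 1 <= r by lia.
have D1 : is_DNS (ext_adj adj N) setT [:: Some (s r)].
  apply: (dns_rconsT (p := [::])) => //.
  by apply: (wit0 (u := Some (s r))); rewrite ?covSS ?eqxx.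
have D2 : is_DNS (ext_adj adj N) setT (rcons [:: Some (s r)] (Some (c r))).
  refine (dns_rconsT D1 _ _); first by rewrite in_cons in_nil orbF (inj_eq (@Some_inj _)) cseq.
  apply/exists_inP; exists (Some (c r)); first by rewrite covSS eqxx.
  by rewrite /= addn0 leq_b1.
have D3 : is_DNS (ext_adj adj N) setT (rcons (rcons [:: Some (s r)] (Some (c r))) None).
  refine (dns_rconsT D2 _ _); first by rewrite mem_rcons !in_cons.
  apply: (wit1 (u := Some (c 1))); [by rewrite covSN | exact: dns_uniq D2 |].
  have r1f : (r == 1) = false by apply/eqP; lia.
  move=> y1 y2; rewrite /= !in_cons in_nil !orbF => /orP[]/eqP -> /orP[]/eqP -> //;
    by rewrite !covSS cseq // (scE r1 c1r) r1f /= ?andbF.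
apply: tail_dns D3 _ => //.
move=> y; rewrite /= !in_cons in_nil orbF => /or3P[]/eqP ->.
- by constructor 2.
- by constructor 3.
- by constructor 1.
Qed.

Lemma ref5 (N : pred T) :
  (forall j, 1 <= j <= r -> N (s j) = (j == r)) ->
  (forall j, 1 <= j <= r -> j != r -> N (c j)) ->
  (forall h, h \in H -> N h) -> H != set0 ->
  forall t, is_DNS (ext_adj adj N) setT t ->
  Some (s r) \in t -> Some (c r) \in t -> None \in t ->
  size t <= 2 * r + gamma adj H.
Proof.
move=> N1 N2 N3 Hne t D a_t b_t n_t.
have r1 := rr; have ut := dns_uniq D.
have NH : forall h h', h \in H -> h' \in H -> N h -> N h' by move=> h h' _ h'H _; exact: N3.
pose W := [:: Some (s r); Some (c r); None].
have Wa : Some (s r) \in W by rewrite /W in_cons eqxx.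
have Wb : Some (c r) \in W by rewrite /W !in_cons eqxx orbT.
have Wn : None \in W by rewrite /W !in_cons eqxx !orbT.
have Wt : forall w, w \in W -> w \in t by move=> w; rewrite !in_cons in_nil orbF => /or3P[]/eqP->.
have WH : forall w, w \in W -> w \notin Some @: H.
  by move=> w; rewrite !in_cons in_nil orbF => /or3P[]/eqP->; rewrite ?inSH ?inNH ?sH ?cH.
pose Dl u := u = None \/ exists2 j, 1 <= j <= r & u = Some (c j).
pose Hl u := exists2 h, h \in H & u = Some h.
have asr : Some (s r) != Some (c r) by rewrite (inj_eq (@Some_inj _)) sceq.
have W2 : forall u, Dl u \/ Hl u -> exists w1, exists w2, [/\ w1 \in W, w2 \in W, w1 != w2,
     u \in cnbh (ext_adj adj N) setT w1 & u \in cnbh (ext_adj adj N) setT w2].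
  move=> u [[->|[j jr ->]]|[h hH ->]].
  - exists (Some (s r)), None; split => //.
    by rewrite covNS N1 ?eqxx.
    exact: covNN.
  - case: (eqVneq j r) => [->|jr'].
      exists (Some (s r)), (Some (c r)); split => //.
        by rewrite covSS scE ?eqxx ?orbT.
      by rewrite covSS eqxx.
    exists (Some (c r)), None; split => //.
      by rewrite covSS cc // (eq_sym r j) jr' orbT.
    by rewrite covSN N2.
  - exists (Some (c r)), None; split => //.
      by rewrite covSS ch ?orbT.
    by rewrite covSN N3.
have K : forall h u, h \in H -> u \in cnbh (ext_adj adj N) setT (Some h) -> Dl u \/ Hl u.
  move=> h [x|] hH; last by left; left.
  case: (boolP (x \in H)) => xH; first by right; exists x.
  have [i ir [->|->]] := notH xH.
    by rewrite covSS sheq ?hs.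
  by left; right; exists i.
have HD : forall y u, Hl y -> Dl u -> u \in cnbh (ext_adj adj N) setT y.
  move=> y u [h hH ->] [->|[j jr ->]]; first by rewrite covNS N3.
  by rewrite covSS hc ?orbT.
have L1 : forall y, y \in t -> y \in Some @: H ->
    (forall w, w \in W -> index w t < index y t) -> False.
  move=> y yt yH Wbef; have [h hH Ey] := imsetP yH; subst y.
  have [u uN uc] := dns_take D yt.
  have [w1 [w2 [w1W w2W ne c1 c2]]] := W2 _ (K _ _ hH uN).
  by apply: (twice uc ne _ _ c1 c2); rewrite in_take ?Wt // Wbef.
have [z zW zmax] := last3 t (Some (s r)) (Some (c r)) None.
have zt := Wt z zW.
have L1' : forall y, y \in t -> y \in Some @: H -> y \in take (index z t) t.
  move=> y yt yH; rewrite in_take //; rewrite ltnNge; apply/negP => zy.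
  apply: (L1 y yt yH) => w wW; rewrite ltn_neqAle (leq_trans (zmax _ wW) zy) andbT.
  apply/negP => /eqP /(index_inj w (Wt _ wW) yt) E.
  by move: (WH _ wW); rewrite E yH.
have [u uN uc] := dns_take D zt.
have bef : forall w, w \in W -> w != z -> w \in take (index z t) t.
  by move=> w wW ne; apply: pre_mem => //; [exact: Wt | exact: zmax].
have tw := twice uc.
have main : Dl u \/ Hl u -> size t <= 2 * r + gamma adj H.
  move=> DH.
  have [w' [w'W w'z w'c]] : exists w', [/\ w' \in W, w' != z & u \in cnbh (ext_adj adj N) setT w'].
    have [w1 [w2 [w1W w2W ne c1 c2]]] := W2 _ DH.
    case: (eqVneq w1 z) => [E|ne1]; last by exists w1.
    by exists w2; split => //; rewrite -E eq_sym.
  have [h hH Hu] : exists2 h, h \in H & (Hl u -> u = Some h).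
    case: DH => [Dlu|[h hH ->]]; last by exists h.
    have /set0Pn[h0 h0H] := Hne; exists h0 => // -[h' h'H Eu].
    by case: Dlu Eu => [->|[j jr ->]] // [] E; move: h'H; rewrite -E cH.
  have NoCov : forall y, y \in t -> y \in Some @: H ->
      Some h \in cnbh (ext_adj adj N) setT y -> False.
    move=> y yt yH yc.
    have yu : u \in cnbh (ext_adj adj N) setT y.
      case: DH => [Dlu|Hlu]; first by apply: HD => //; have [h' ? ->] := imsetP yH; exists h'.
      by rewrite (Hu Hlu).
    apply: (tw y w') => //; [ | exact: L1' | exact: bef].
    by apply: contraTneq yH => ->; apply: WH.
  apply: (@opt_upper_ref N NH t h h) => //.
  - apply/negP => ht; apply: (NoCov _ ht); by rewrite ?inSH ?covSS ?eqxx.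
  - by rewrite eqxx.
  - apply: count_le1 => // y1 y2 y1t _ /andP[y1H y1c].
    by case: (NoCov _ y1t y1H y1c).
case: u uN uc tw main => [x|] uN uc tw main; last by apply: main; left; left.
case: (boolP (x \in H)) => xH; first by apply: main; right; exists x.
have [i ir [Ex|Ex]] := notH xH; subst x; last by apply: main; left; right; exists i.
exfalso.
have covsr : forall w, w \in W -> Some (s r) \in cnbh (ext_adj adj N) setT w.
  move=> w; rewrite !in_cons in_nil orbF => /or3P[]/eqP->.
  - by rewrite covSS eqxx.
  - by rewrite covSS cs ?eqxx ?orbT.
  - by rewrite covSN N1 ?eqxx.
case: (eqVneq i r) => [Ei|ne]; first subst i.
  move: zW; rewrite !in_cons in_nil orbF => /or3P[]/eqP Ez; subst z.
  - by apply: (tw (Some (c r)) None) => //; rewrite ?bef ?covsr ?asr //; rewrite eq_sym asr.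
  - by apply: (tw (Some (s r)) None) => //; rewrite ?bef ?covsr ?asr //; rewrite eq_sym asr.
  - by apply: (tw (Some (s r)) (Some (c r))) => //; rewrite ?bef ?covsr ?asr //; rewrite eq_sym asr.
move: uN; move: zW; rewrite !in_cons in_nil orbF => /or3P[]/eqP ->.
- by rewrite covSS seqE // (negbTE ne) ss.
- by rewrite covSS sceq // cs // (negbTE ne).
- by rewrite covSN N1 // (negbTE ne).
Qed.

Lemma ref3 : H != set0 -> ~~ has_isolated adj H ->
  forall t, is_DNS (ext_adj adj (fun b => (b == s r) || adj (s r) b)) setT t ->
  Some (s r) \in t -> Some (c r) \in t -> None \in t ->
  size t <= 2 * r + gamma adj H.
Proof.
move=> Hne Hiso t D a_t b_t n_t.
have r1 := rr; have ut := dns_uniq D.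
set N := fun b => (b == s r) || adj (s r) b.
have Nh : forall h, h \in H -> N h = false by move=> h hH; rewrite /N hseq ?sh.
have NH : forall h h', h \in H -> h' \in H -> N h -> N h'.
  by move=> h h' hH; rewrite Nh.
have nbr : forall v, v \in H -> exists2 y, y \in H & adj v y.
  move=> v vH; move: Hiso => /existsPn /(_ v); rewrite vH /= => /forall_inPn [y yH].
  by rewrite negbK => ?; exists y.
pose W := [:: Some (s r); Some (c r); None].
have Wa : Some (s r) \in W by rewrite /W in_cons eqxx.
have Wb : Some (c r) \in W by rewrite /W !in_cons eqxx orbT.
have Wn : None \in W by rewrite /W !in_cons eqxx !orbT.
have Wt : forall w, w \in W -> w \in t by move=> w; rewrite !in_cons in_nil orbF => /or3P[]/eqP->.
have WH : forall w, w \in W -> w \notin Some @: H.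
  by move=> w; rewrite !in_cons in_nil orbF => /or3P[]/eqP->; rewrite ?inSH ?inNH ?sH ?cH.
have asr : Some (s r) != Some (c r) by rewrite (inj_eq (@Some_inj _)) sceq.
have Nsr : N (s r) by rewrite /N eqxx.
have Ncr : N (c r) by rewrite /N scE ?eqxx ?orbT.
have AllW : forall w w', w \in W -> w' \in W -> w \in cnbh (ext_adj adj N) setT w'.
  move=> w w'; rewrite !in_cons in_nil !orbF => /or3P[]/eqP-> /or3P[]/eqP->;
    rewrite ?covSS ?covSN ?covNS ?covNN ?eqxx ?Nsr ?Ncr ?orbT //.
  - by rewrite cs ?eqxx ?orbT.
have Ninv : forall x, N x -> Some x \in W.
  move=> x /orP[/eqP->//|]; case: (boolP (x \in H)) => xH; first by rewrite sh.
  have [j jr [->|->]] := notH xH; first by rewrite ss.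
  by rewrite scE // => /eqP <-.
have [z zW zmax] := last3 t (Some (s r)) (Some (c r)) None.
have zt := Wt z zW.
have [u uN uc] := dns_take D zt.
have bef : forall w, w \in W -> w != z -> w \in take (index z t) t.
  by move=> w wW ne; apply: pre_mem => //; [exact: Wt | exact: zmax].
have tw := twice uc.
have notW : u \in W -> False.
  move=> uW; move: zW; rewrite !in_cons in_nil orbF => /or3P[]/eqP Ez; subst z.
  - by apply: (tw (Some (c r)) None) => //; rewrite ?bef ?AllW ?asr //; rewrite eq_sym asr.
  - by apply: (tw (Some (s r)) None) => //; rewrite ?bef ?AllW ?asr //; rewrite eq_sym asr.
  - by apply: (tw (Some (s r)) (Some (c r))) => //; rewrite ?bef ?AllW ?asr //; rewrite eq_sym asr.
have Ez : z = Some (c r).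
  move: zW uN; rewrite !in_cons in_nil orbF => /or3P[]/eqP -> // uN; exfalso; apply: notW.
  - case: u uN {uc tw} => [x|] uN //; apply: Ninv; by rewrite covSS in uN.
  - case: u uN {uc tw} => [x|] uN //; apply: Ninv; by rewrite covSN in uN.
subst z.
have ucl : (exists2 h, h \in H & u = Some h) \/
           (exists j, [/\ 1 <= j <= r, j != r & u = Some (c j)]).
  case: u uN uc tw notW => [x|] uN uc tw notW; last by exfalso; apply: notW.
  case: (boolP (x \in H)) => xH; first by left; exists x.
  have [j jr [Ex|Ex]] := notH xH; subst x.
    exfalso; move: uN; rewrite covSS sceq // cs //= => /eqP Ej; subst j; exact: notW.
  case: (eqVneq j r) => [Ej|ne]; first by exfalso; subst j; exact: notW.
  by right; exists j.
pose P := fun y => (y \in t) && (y \in Some @: H).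
have PH : forall y, y \in Some @: H -> y != Some (c r).
  move=> y yH; apply: contraTneq yH => ->; exact: WH.
have covH : forall y j, y \in Some @: H -> 1 <= j <= r ->
    Some (c j) \in cnbh (ext_adj adj N) setT y.
  move=> y j yH jr; have [h hH ->] := imsetP yH; by rewrite covSS hc ?orbT.
case: (boolP [exists y, P y && (index (Some (c r)) t < index y t)]) =>
    [/existsP[y0 /andP[Py0 lt0]] | /existsPn noafter].
- case: (arg_maxnP (fun y => index y t) Py0) => ys Pys ysmax.
  have /andP[ys_t ysH] := Pys.
  have [hy hyH Eys] := imsetP ysH.
  have bpre : Some (c r) \in take (index ys t) t.
    by rewrite in_take //; exact: leq_trans lt0 (ysmax y0 Py0).
  have [w wN wc] := dns_take D ys_t.
  have tw2 := twice wc.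
  have wcl : (exists2 x, x \in H & w = Some x) \/ (exists2 j, 1 <= j <= r & w = Some (c j)).
    move: wN; rewrite Eys; case: w {wc tw2} => [x|]; last by rewrite covNS /N hseq ?sh.
    rewrite covSS => xN; case: (boolP (x \in H)) => xH; first by left; exists x.
    have [j jr [Ex|->]] := notH xH; last by right; exists j.
    by move: xN; rewrite Ex sheq // hs.
  have bw : w \in cnbh (ext_adj adj N) setT (Some (c r)).
    case: wcl => [[x xH ->]|[j jr ->]]; rewrite covSS; first by rewrite ch ?orbT.
    by case: (eqVneq j r) => [->|ne]; rewrite ?eqxx // cc // (eq_sym r j) ne orbT.
  have Uq : forall y, y \in t -> y \in Some @: H -> w \in cnbh (ext_adj adj N) setT y -> y = ys.
    move=> y yt yH yw; have Py : P y by rewrite /P yt yH.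
    case: (ltngtP (index y t) (index ys t)) => [lt|gt|eq].
    + exfalso; apply: (tw2 y (Some (c r))) => //; [exact: PH | by rewrite in_take].
    + have h : index y t <= index ys t := ysmax y Py; by rewrite leqNgt gt in h.
    + exact: (index_inj y yt ys_t).
  case: wcl => [[x xH Ew]|[j jr Ew]].
  + case: (boolP (Some x \in t)) => xt.
    * have Exs : Some x = ys by apply: Uq; rewrite ?inSH // Ew covSS eqxx.
      move: Exs; rewrite Eys => -[Ex]; subst x.
      have [y1 y1H adj1] := nbr hy hyH.
      apply: (@opt_upper_ref N NH t y1 hy) => //.
      - apply/negP => y1t.
        have := Uq (Some y1) y1t; rewrite inSH y1H Ew covSS asym adj1 orbT Eys.
        move=> /(_ isT isT) [E]; by move: adj1; rewrite E airr.
      - by rewrite asym adj1 orbT.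
      - apply: count_le1 => // y1' y2' t1 t2 /andP[h1 c1] /andP[h2 c2].
        by rewrite -Ew in c1 c2; rewrite (Uq _ t1 h1 c1) (Uq _ t2 h2 c2).
    * apply: (@opt_upper_ref N NH t x x) => //; first by rewrite eqxx.
      apply: count_le1 => // y1' y2' t1 t2 /andP[h1 c1] /andP[h2 c2].
      by rewrite -Ew in c1 c2; rewrite (Uq _ t1 h1 c1) (Uq _ t2 h2 c2).
  + have Uq' : forall y, y \in t -> y \in Some @: H -> y = ys.
      by move=> y yt yH; apply: Uq => //; rewrite Ew covH.
    have [y1 y1H adj1] := nbr hy hyH.
    have y1n : Some y1 \notin t.
      apply/negP => y1t.
      have := Uq' (Some y1) y1t; rewrite inSH y1H Eys => /(_ isT) [E].
      by move: adj1; rewrite E airr.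
    have y1c : (hy == y1) || adj y1 hy by rewrite asym adj1 orbT.
    apply: (@opt_upper_ref N NH t y1 hy D y1H y1n hyH y1c).
    apply: count_le1 => // y1' y2' t1 t2 /andP[h1 c1] /andP[h2 c2].
    by rewrite (Uq' _ t1 h1) (Uq' _ t2 h2).
- have preb : forall y, y \in t -> y \in Some @: H -> y \in take (index (Some (c r)) t) t.
    move=> y yt yH; apply: pre_mem => //; first exact: PH.
    by have := noafter y; rewrite /P yt yH /= -leqNgt.
  case: ucl => [[h hH Eu]|[j [jr jne Eu]]].
  + have Uq2 : forall y1 y2, y1 \in t -> y2 \in t -> y1 \in Some @: H -> y2 \in Some @: H ->
        u \in cnbh (ext_adj adj N) setT y1 -> u \in cnbh (ext_adj adj N) setT y2 -> y1 = y2.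
      move=> y1 y2 t1 t2 h1 h2 c1 c2; case: (eqVneq y1 y2) => // ne; exfalso.
      exact: (tw y1 y2 ne (preb _ t1 h1) (preb _ t2 h2) c1 c2).
    case: (boolP (Some h \in t)) => ht.
    * have [y1 y1H adj1] := nbr h hH.
      apply: (@opt_upper_ref N NH t y1 h) => //.
      - apply/negP => y1t.
        have := Uq2 (Some y1) (Some h) y1t ht; rewrite !inSH y1H hH Eu !covSS eqxx asym adj1 orbT.
        move=> /(_ isT isT isT isT) [E]; by move: adj1; rewrite E airr.
      - by rewrite asym adj1 orbT.
      - apply: count_le1 => // y1' y2' t1 t2 /andP[h1 c1] /andP[h2 c2].
        by rewrite -Eu in c1 c2; apply: (Uq2 _ _ t1 t2 h1 h2 c1 c2).
    * apply: (@opt_upper_ref N NH t h h) => //; first by rewrite eqxx.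
      apply: count_le1 => // y1' y2' t1 t2 /andP[h1 c1] /andP[h2 c2].
      by rewrite -Eu in c1 c2; apply: (Uq2 _ _ t1 t2 h1 h2 c1 c2).
  + have AllEq : forall y1 y2, y1 \in t -> y2 \in t -> y1 \in Some @: H -> y2 \in Some @: H ->
        y1 = y2.
      move=> y1 y2 t1 t2 h1 h2; case: (eqVneq y1 y2) => // ne; exfalso.
      by apply: (tw y1 y2 ne (preb _ t1 h1) (preb _ t2 h2)); rewrite Eu covH.
    have /set0Pn[h0 h0H] := Hne.
    have [y1 y1H adj1] := nbr h0 h0H.
    case: (boolP (Some h0 \in t)) => h0t.
    * apply: (@opt_upper_ref N NH t y1 y1) => //; rewrite ?eqxx //.
      - apply/negP => y1t.
        have := AllEq _ _ y1t h0t; rewrite !inSH y1H h0H => /(_ isT isT) [E].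
        by move: adj1; rewrite E airr.
      - apply: count_le1 => // y1' y2' t1 t2 /andP[h1 c1] /andP[h2 c2].
        exact: (AllEq _ _ t1 t2 h1 h2).
    * apply: (@opt_upper_ref N NH t h0 h0) => //; rewrite ?eqxx //.
      apply: count_le1 => // y1' y2' t1 t2 /andP[h1 c1] /andP[h2 c2].
      exact: (AllEq _ _ t1 t2 h1 h2).
Qed.

Definition Lg := [seq s i | i <- iota 1 r] ++ [seq c i | i <- iota 1 r].

Lemma inIdH y : (y \in [set id x | x in H]) = (y \in H).
Proof.
apply/imsetP/idP => [[x xH ->] //|yH]; by exists y.
Qed.

Lemma gammaG TH : is_MDNS adj H TH -> gamma adj setT = 2 * r + size TH.
Proof.
move=> [DT ST]; apply/eqP; rewrite eqn_leq; apply/andP; split.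
  apply: gamma_le => t D.
  have hL : forall y, y \notin [set id x | x in H] -> y \in Lg.
    move=> y; rewrite inIdH => /notH[i ir [->|->]]; rewrite /Lg mem_cat.
      by apply/orP; left; apply/mapP; exists i; rewrite ?iota_rng.
    by apply/orP; right; apply/mapP; exists i; rewrite ?iota_rng.
  have em : forall y h h', y \notin [set id x | x in H] -> h \in H -> h' \in H ->
       adj y (id h) -> adj y (id h').
    move=> y h h'; rewrite inIdH => /notH[i ir [->|->]] hH h'H /=; first by rewrite sh.
    by rewrite !ch.
  have := upper (f := id) (fun x y (E : id x = id y) => E) asym (fun _ _ => erefl) em hL D.
  rewrite ST /Lg size_cat !size_map size_iota => hh; apply: (leq_trans hh); rewrite mul2n -addnn; exact: leqnn.
have := gamma_ge (lower_main (g := id) (e := adj) (fun x y (E : id x = id y) => E)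
    (fun _ _ => erefl) DT).
by rewrite !size_cat !size_map size_iota; lia.
Qed.

Lemma Lo_a : Some (s r) \in Lo.
Proof. by rewrite /Lo mem_cat; apply/orP; left; apply/mapP; exists r; rewrite ?iota_rng ?rr. Qed.
Lemma Lo_b : Some (c r) \in Lo.
Proof.
rewrite /Lo !mem_cat; apply/orP; right; apply/orP; left; apply/mapP; exists r => //.
by rewrite iota_rng rr.
Qed.
Lemma Lo_n : None \in Lo.
Proof. by rewrite /Lo !mem_cat inE eqxx !orbT. Qed.

Lemma opt_gamma_ref (N : pred T) :
  (forall h h', h \in H -> h' \in H -> N h -> N h') ->
  (forall t, is_DNS (ext_adj adj N) setT t ->
     Some (s r) \in t -> Some (c r) \in t -> None \in t -> size t <= 2 * r + gamma adj H) ->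
  gamma (ext_adj adj N) setT <= 2 * r + gamma adj H.
Proof.
move=> NH R; apply: gamma_le => t D.
case: (boolP (Some (s r) \in t)) => at_; last by apply: (opt_upper_miss NH D Lo_a).
case: (boolP (Some (c r) \in t)) => bt; last by apply: (opt_upper_miss NH D Lo_b).
case: (boolP (None \in t)) => nt; last by apply: (opt_upper_miss NH D Lo_n).
exact: R.
Qed.

Lemma opt_gamma (N : pred T) :
  (forall h h', h \in H -> h' \in H -> N h -> N h') ->
  gamma (ext_adj adj N) setT <= 2 * r + 1 + gamma adj H.
Proof. by move=> NH; apply: gamma_le => t D; apply: (opt_upper NH D). Qed.

Lemma main_spider TH : is_MDNS adj H TH ->
  let Sf := add_false_twin adj (s r) in
  let St := add_true_twin adj (s r) in
  let Cf := add_false_twin adj (c r) in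
  let Ct := add_true_twin adj (c r) in
  let cs k := [seq Some (c i) | i <- iota 1 k] in
  let ss k := [seq Some (s i) | i <- iota 1 k] in
  let TH' := [seq Some x | x <- TH] in
  [/\
   [/\ gamma Sf setT = gamma adj setT + 1,
       gamma adj setT + 1 = 2 * r + 1 + gamma adj H
     & is_MDNS Sf setT (TH' ++ cs r ++ ss r ++ [:: None])],
   (H == set0) || has_isolated adj H ->
   [/\ gamma St setT = gamma adj setT + 1,
       gamma adj setT + 1 = 2 * r + 1 + gamma adj H
     & is_MDNS St setT
         (TH' ++ [:: Some (s r); None; Some (c r)] ++ cs r.-1 ++ ss r.-1)],
   H != set0 -> ~~ has_isolated adj H ->
   gamma St setT = 2 * r + gamma adj H /\
   is_MDNS St setT (TH' ++ cs r ++ ss r),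
   H == set0 ->
   [/\ gamma Cf setT = gamma Ct setT,
       gamma Ct setT = gamma adj setT + 1,
       gamma adj setT + 1 = 2 * r + 1,
       is_MDNS Cf setT ([:: Some (s r); Some (c r); None] ++ cs r.-1 ++ ss r.-1)
     & is_MDNS Ct setT ([:: Some (s r); Some (c r); None] ++ cs r.-1 ++ ss r.-1)]
   &
   H != set0 ->
   [/\ gamma Cf setT = gamma Ct setT,
       gamma Ct setT = 2 * r + gamma adj H,
       is_MDNS Cf setT (TH' ++ cs r ++ ss r)
     & is_MDNS Ct setT (TH' ++ cs r ++ ss r)]].
Proof.
move=> MD; have gG := gammaG MD; case: MD => DT ST.
move=> Sf St Cf Ct cs0 ss0 THp.
have r1 := rr.
have /and3P[_ /allP THH _] := DT.
rewrite /Sf /St /Cf /Ct /add_false_twin /add_true_twin /cs0 /ss0 /THp.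
rewrite -ST in gG *.
set n := size TH in gG *.
have szL : forall k, size [seq Some (c i) | i <- iota 1 k] = k /\ size [seq Some (s i) | i <- iota 1 k] = k.
  by move=> k; rewrite !size_map size_iota.
have szT : size [seq Some x | x <- TH] = n by rewrite size_map.
have NHs : forall h h', h \in H -> h' \in H -> adj (s r) h -> adj (s r) h'.
  by move=> h h' hH; rewrite sh.
have NHst : forall h h', h \in H -> h' \in H ->
    (fun b => (b == s r) || adj (s r) b) h -> (fun b => (b == s r) || adj (s r) b) h'.
  by move=> h h' hH h'H /=; rewrite (hseq r1 hH) (sh r1 hH).
have NHc : forall h h', h \in H -> h' \in H -> adj (c r) h -> adj (c r) h'.
  by move=> h h' _ h'H _; rewrite ch.
have NHct : forall h h', h \in H -> h' \in H ->
    (fun b => (b == c r) || adj (c r) b) h -> (fun b => (b == c r) || adj (c r) b) h'.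
  by move=> h h' _ h'H _; rewrite /= ch ?orbT.
have gSf : gamma (ext_adj adj (adj (s r))) setT = 2 * r + 1 + n.
  apply/eqP; rewrite eqn_leq; apply/andP; split.
    by have := opt_gamma NHs; rewrite -ST.
  have := gamma_ge (low_Sf DT); rewrite !size_cat szT (szL r).1 (szL r).2 /=.
  by move=> h; apply: leq_trans h; rewrite mul2n -addnn; lia.
have gStu : gamma (ext_adj adj (fun b => (b == s r) || adj (s r) b)) setT <= 2 * r + 1 + n.
  by have := opt_gamma NHst; rewrite -ST.
have Ns1 : forall k, 1 <= k < r -> adj (c r) (s k) = false.
  by move=> k kr; rewrite cs; [apply/eqP; lia | lia | done].
have Ns2 : forall k, 1 <= k < r -> (s k == c r) || adj (c r) (s k) = false.
  by move=> k kr; rewrite Ns1 // sceq //; lia.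
have Nc1 : adj (c r) (c 1) by rewrite cc //; [apply/eqP; lia | lia].
have Nc2 : (c 1 == c r) || adj (c r) (c 1) by rewrite Nc1 orbT.
have lowM : forall N : pred T, is_DNS (ext_adj adj N) setT
    ([seq Some x | x <- TH] ++ [seq Some (c i) | i <- iota 1 r] ++ [seq Some (s i) | i <- iota 1 r]).
  move=> N; exact: (lower_main (e := ext_adj adj N) (g := Some) (@Some_inj _) (fun _ _ => erefl) DT).
have lowS : forall N : pred T, gamma (ext_adj adj N) setT >= 2 * r + n.
  move=> N; have := gamma_ge (lower_main (e := ext_adj adj N) (g := Some) (@Some_inj _)
    (fun _ _ => erefl) DT).
  by rewrite !size_cat szT !size_map size_iota; lia.
split.
- split; [by rewrite gSf gG; lia | by rewrite gG; lia | split].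
  + exact: low_Sf DT.
  + by rewrite gSf !size_cat szT (szL r).1 (szL r).2 /=; lia.
- move=> Hiso; have DS := low_St DT Hiso.
  have szS : size ([seq Some x | x <- TH] ++ [:: Some (s r); None; Some (c r)] ++
      [seq Some (c i) | i <- iota 1 r.-1] ++ [seq Some (s i) | i <- iota 1 r.-1]) = 2 * r + 1 + n.
    by rewrite !size_cat szT (szL r.-1).1 (szL r.-1).2 /=; lia.
  have gS : gamma (ext_adj adj (fun b => (b == s r) || adj (s r) b)) setT = 2 * r + 1 + n.
    by apply/eqP; rewrite eqn_leq gStu /= -szS gamma_ge.
  split; [by rewrite gS gG; lia | by rewrite gG; lia | split => //].
  by rewrite gS.
- move=> Hne Hni.
  have gS : gamma (ext_adj adj (fun b => (b == s r) || adj (s r) b)) setT = 2 * r + n.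
    apply/eqP; rewrite eqn_leq lowS andbT.
    have := opt_gamma_ref NHst (fun t D a b d => ref3 Hne Hni D a b d).
    by rewrite -ST.
  split => //; split.
    exact: lowM.
  by rewrite gS !size_cat szT (szL r).1 (szL r).2; lia.
- move=> H0.
  have n0 : n = 0.
    rewrite /n; case E : TH => [//|a l].
    by have := THH a; rewrite E mem_head (eqP H0) inE => /(_ isT).
  have szC : size ([:: Some (s r); Some (c r); None] ++
      [seq Some (c i) | i <- iota 1 r.-1] ++ [seq Some (s i) | i <- iota 1 r.-1]) = 2 * r + 1.
    by rewrite !size_cat (szL r.-1).1 (szL r.-1).2 /=; lia.
  have gCf : gamma (ext_adj adj (adj (c r))) setT = 2 * r + 1.
    apply/eqP; rewrite eqn_leq; apply/andP; split.
      by have := opt_gamma NHc; rewrite -ST -/n n0 addn0.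
    by rewrite -szC gamma_ge // low_C.
  have gCt : gamma (ext_adj adj (fun b => (b == c r) || adj (c r) b)) setT = 2 * r + 1.
    apply/eqP; rewrite eqn_leq; apply/andP; split.
      by have := opt_gamma NHct; rewrite -ST -/n n0 addn0.
    by rewrite -szC gamma_ge // low_C.
  split; [by rewrite gCf gCt | by rewrite gCt gG n0; lia | by rewrite gG n0; lia | |].
  + by split; [exact: low_C | rewrite szC gCf].
  + by split; [exact: low_C | rewrite szC gCt].
- move=> Hne.
  have N1f : forall j, 1 <= j <= r -> adj (c r) (s j) = (j == r) by move=> j jr; rewrite cs.
  have N2f : forall j, 1 <= j <= r -> j != r -> adj (c r) (c j) by move=> j jr ne; rewrite cc // (eq_sym r j).
  have N3f : forall h, h \in H -> adj (c r) h by move=> h hH; rewrite ch.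
  have N1t : forall j, 1 <= j <= r -> (s j == c r) || adj (c r) (s j) = (j == r).
    by move=> j jr; rewrite sceq // cs.
  have N2t : forall j, 1 <= j <= r -> j != r -> (c j == c r) || adj (c r) (c j).
    by move=> j jr ne; rewrite cc // (eq_sym r j) ne orbT.
  have N3t : forall h, h \in H -> (h == c r) || adj (c r) h by move=> h hH; rewrite ch ?orbT.
  have gCf : gamma (ext_adj adj (adj (c r))) setT = 2 * r + n.
    apply/eqP; rewrite eqn_leq lowS andbT.
    have := opt_gamma_ref NHc (fun t D a b d => ref5 N1f N2f N3f Hne D a b d).
    by rewrite -ST.
  have gCt : gamma (ext_adj adj (fun b => (b == c r) || adj (c r) b)) setT = 2 * r + n.
    apply/eqP; rewrite eqn_leq lowS andbT.
    have := opt_gamma_ref NHct (fun t D a b d => ref5 N1t N2t N3t Hne D a b d).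
    by rewrite -ST.
  have szM : size ([seq Some x | x <- TH] ++ [seq Some (c i) | i <- iota 1 r] ++
      [seq Some (s i) | i <- iota 1 r]) = 2 * r + n.
    by rewrite !size_cat szT (szL r).1 (szL r).2; lia.
  split; [by rewrite gCf gCt | by rewrite gCt | |].
  + by split; [exact: lowM | rewrite szM gCf].
  + by split; [exact: lowM | rewrite szM gCt].
Qed.

End Spider.


Unset Implicit Arguments.

Theorem proposition9 (T : finType) (adj : rel T) (r : nat) (s c : nat -> T)
    (H : {set T}) (TH : seq T) :
  symmetric adj -> irreflexive adj ->
  thin_spider adj r s c H ->
  is_MDNS adj H TH ->
  let Sf := add_false_twin adj (s r) in
  let St := add_true_twin adj (s r) in
  let Cf := add_false_twin adj (c r) in
  let Ct := add_true_twin adj (c r) in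
  let cs k := [seq Some (c i) | i <- iota 1 k] in
  let ss k := [seq Some (s i) | i <- iota 1 k] in
  let TH' := [seq Some x | x <- TH] in
  [/\
   (* (1) *)
   [/\ gamma Sf setT = gamma adj setT + 1,
       gamma adj setT + 1 = 2 * r + 1 + gamma adj H
     & is_MDNS Sf setT (TH' ++ cs r ++ ss r ++ [:: None])],
   (* (2) *)
   (H == set0) || has_isolated adj H ->
   [/\ gamma St setT = gamma adj setT + 1,
       gamma adj setT + 1 = 2 * r + 1 + gamma adj H
     & is_MDNS St setT
         (TH' ++ [:: Some (s r); None; Some (c r)] ++ cs r.-1 ++ ss r.-1)],
   (* (3) *)
   H != set0 -> ~~ has_isolated adj H ->
   gamma St setT = 2 * r + gamma adj H /\
   is_MDNS St setT (TH' ++ cs r ++ ss r),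
   (* (4) *)
   H == set0 ->
   [/\ gamma Cf setT = gamma Ct setT,
       gamma Ct setT = gamma adj setT + 1,
       gamma adj setT + 1 = 2 * r + 1,
       is_MDNS Cf setT ([:: Some (s r); Some (c r); None] ++ cs r.-1 ++ ss r.-1)
     & is_MDNS Ct setT ([:: Some (s r); Some (c r); None] ++ cs r.-1 ++ ss r.-1)]
   &
   (* (5) *)
   H != set0 ->
   [/\ gamma Cf setT = gamma Ct setT,
       gamma Ct setT = 2 * r + gamma adj H,
       is_MDNS Cf setT (TH' ++ cs r ++ ss r)
     & is_MDNS Ct setT (TH' ++ cs r ++ ss r)]].
Proof.
move=> asym airr [[r2 sinj cinj snc Hdef] [ssn cca chH scE]] MD.
exact: (main_spider asym airr r2 sinj cinj snc Hdef ssn cca chH scE MD).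
Qed.
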